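(* Let $P,Q\in\mathbb{P}$ and suppose $P(\omega^t)>0$ for every cylinder $\omega^t$. If $P$ merges with $Q$, then $Q\ll P$.
   Context: Let $\Omega=\{0,1\}^{\mathbb N}$ (the set of infinite $0$-$1$ sequences, called paths), with the product topology. For $\omega\in\Omega$ and $t\ge 0$, $\omega^t$ denotes the cylinder of length $t$ with base $\omega$, i.e. the set of all paths agreeing with $\omega$ in the first $t$ coordinates ($\omega^0=\Omega$). Fix a $\sigma$-algebra $\Sigma$ of subsets of $\Omega$ containing all cylinders. $\mathbb P$ denotes the set of finitely additive probability measures on $(\Omega,\Sigma)$. For $R\in\mathbb P$, $E\in\Sigma$ and a cylinder $\omega^t$ with $R(\omega^t)>0$, write $R(E\mid\omega^t)=R(E\cap\omega^t)/R(\omega^t)$. For $P,Q\in\mathbb P$, $P$ merges with $Q$ if for every $\varepsilon>0$, $\lim_{t\to\infty} Q\big(\{\omega:\sup_{E\in\Sigma}|P(E\mid\omega^t)-Q(E\mid\omega^t)|>\varepsilon\}\big)=0$ (the set is a union of cylinders of length $t$; cylinders with $Q(\omega^t)=0$ are irrelevant, and a cylinder with $Q(\omega^t)>0=P(\omega^t)$ is counted as belonging to the set). $Q$ is absolutely continuous with respect to $P$, written $Q\ll P$, if for every sequence $(E_n)$ in $\Sigma$, $P(E_n)\to 0$ implies $Q(E_n)\to 0$. *)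

(* Defs.v *)
From Stdlib Require Import Reals Lra.
Open Scope R_scope.

Definition Omega := nat -> bool.
Definition event := Omega -> Prop.

Definition cyl (w : Omega) (t : nat) : event :=
  fun v => forall i, (i < t)%nat -> v i = w i.

Definition full : event := fun _ => True.
Definition compl (A : event) : event := fun v => ~ A v.
Definition inter (A B : event) : event := fun v => A v /\ B v.
Definition disjoint (A B : event) : Prop := forall v, ~ (A v /\ B v).
Definition union (A B : event) : event := fun v => A v \/ B v.
Definition bigunion (A : nat -> event) : event := fun v => exists n, A n v.

Record sigma_algebra (S : event -> Prop) : Prop := {
  sa_full : S full;
  sa_compl : forall A, S A -> S (compl A);
  sa_bigunion : forall A : nat -> event, (forall n, S (A n)) -> S (bigunion A)
}.

(* Finitely additive probability measure on (Omega, S); values outside S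
   are irrelevant. *)
Record fa_prob (S : event -> Prop) (m : event -> R) : Prop := {
  fp_nonneg : forall A, S A -> 0 <= m A;
  fp_full : m full = 1;
  fp_add : forall A B, S A -> S B -> disjoint A B -> m (union A B) = m A + m B
}.

Definition cond (m : event -> R) (E : event) (w : Omega) (t : nat) : R :=
  m (inter E (cyl w t)) / m (cyl w t).

(* The set of paths w such that sup_{E in S} |P(E|w^t) - Q(E|w^t)| > eps,
   with the conventions: cylinders with Q(w^t)=0 are left out (irrelevant),
   and cylinders with Q(w^t)>0=P(w^t) are counted in the set. *)
Definition bad_set (S : event -> Prop) (P Q : event -> R) (eps : R) (t : nat)
  : event :=
  fun w => 0 < Q (cyl w t) /\
    (P (cyl w t) = 0 \/
     exists E, S E /\ Rabs (cond P E w t - cond Q E w t) > eps).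

Definition merges (S : event -> Prop) (P Q : event -> R) : Prop :=
  forall eps, eps > 0 -> Un_cv (fun t => Q (bad_set S P Q eps t)) 0.

Definition abs_cont (S : event -> Prop) (Q P : event -> R) : Prop :=
  forall E : nat -> event, (forall n, S (E n)) ->
    Un_cv (fun n => P (E n)) 0 -> Un_cv (fun n => Q (E n)) 0.

(* Main.v *)
Require Import Defs.
From Stdlib Require Import Reals Lra Arith Lia Classical FunctionalExtensionality PropExtensionality.
Open Scope R_scope.

Lemma ev_ext (A B : event) : (forall v, A v <-> B v) -> A = B.
Proof. intros H; apply functional_extensionality; intro v; apply propositional_extensionality; auto. Qed.

Section SA.
Variable S : event -> Prop.
Hypothesis HS : sigma_algebra S.

Lemma sa_union A B : S A -> S B -> S (union A B).
Proof.
  intros HA HB.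
  replace (union A B) with (bigunion (fun n => match n with 0%nat => A | _ => B end)).
  - apply (sa_bigunion _ HS). intros [|n]; auto.
  - apply ev_ext; intro v; unfold bigunion, union; split.
    + intros [[|n] H]; auto.
    + intros [H|H]; [exists 0%nat|exists 1%nat]; auto.
Qed.

Lemma sa_inter A B : S A -> S B -> S (inter A B).
Proof.
  intros HA HB.
  replace (inter A B) with (compl (union (compl A) (compl B))).
  - apply (sa_compl _ HS), sa_union; apply (sa_compl _ HS); auto.
  - apply ev_ext; intro v; unfold compl, union, inter; split.
    + intros H; split; apply NNPP; intro; apply H; auto.
    + intros [H1 H2] [H|H]; auto.
Qed.

Lemma sa_empty : S (fun _ => False).
Proof.
  replace (fun _ : Omega => False) with (compl full).
  - apply (sa_compl _ HS), (sa_full _ HS).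
  - apply ev_ext; intro v; unfold compl, full; tauto.
Qed.

Variable m : event -> R.
Hypothesis Hm : fa_prob S m.

Lemma m_mono A B : S A -> S B -> (forall v, A v -> B v) -> m A <= m B.
Proof.
  intros HA HB Hsub.
  replace B with (union A (inter B (compl A))).
  - rewrite (fp_add _ _ Hm); auto.
    + assert (0 <= m (inter B (compl A))); [apply (fp_nonneg _ _ Hm), sa_inter; auto; apply (sa_compl _ HS); auto | lra].
    + apply sa_inter; auto; apply (sa_compl _ HS); auto.
    + intros v [H1 [H2 H3]]; auto.
  - apply ev_ext; intro v; unfold union, inter, compl; split.
    + intros [H|[H _]]; auto.
    + intros H; destruct (classic (A v)); auto.
Qed.

Lemma m_le1 A : S A -> m A <= 1.
Proof. intros HA; rewrite <- (fp_full _ _ Hm); apply m_mono; auto; [apply (sa_full _ HS)| intros; exact I]. Qed.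
End SA.

Definition upd (w : Omega) (t : nat) (b : bool) : Omega :=
  fun i => if Nat.eqb i t then b else w i.

Fixpoint sumw (t : nat) (F : Omega -> R) : R :=
  match t with
  | 0%nat => F (fun _ => false)
  | S t' => sumw t' (fun w => F (upd w t' false) + F (upd w t' true))
  end.

Lemma sumw_le t : forall F G, (forall w, F w <= G w) -> sumw t F <= sumw t G.
Proof. induction t; intros F G H; simpl; auto. apply IHt; intro w; pose proof (H (upd w t false)); pose proof (H (upd w t true)); lra. Qed.

Lemma sumw_ext t : forall F G, (forall w, F w = G w) -> sumw t F = sumw t G.
Proof. intros F G H; apply Rle_antisym; apply sumw_le; intro w; rewrite H; lra. Qed.

Lemma sumw_plus t : forall F G, sumw t (fun w => F w + G w) = sumw t F + sumw t G.
Proof. induction t; intros F G; simpl; auto. rewrite <- IHt; apply sumw_ext; intro; lra. Qed.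

Lemma sumw_scal t : forall c F, sumw t (fun w => c * F w) = c * sumw t F.
Proof. induction t; intros c F; simpl; auto. rewrite <- IHt; apply sumw_ext; intro; lra. Qed.

Lemma cyl_upd w t b v : cyl (upd w t b) (S t) v <-> (cyl w t v /\ v t = b).
Proof.
  unfold cyl, upd; split.
  - intros H; split.
    + intros i Hi; rewrite H by lia. destruct (Nat.eqb_spec i t); [lia|auto].
    + rewrite H by lia; rewrite Nat.eqb_refl; auto.
  - intros [H1 H2] i Hi. destruct (Nat.eqb_spec i t); subst; auto. apply H1; lia.
Qed.

Lemma m_sumw S m : sigma_algebra S -> fa_prob S m -> (forall w t, S (cyl w t)) ->
  forall t A, S A -> m A = sumw t (fun w => m (inter A (cyl w t))).
Proof.
  intros HS Hm Hc t; induction t; intros A HA; simpl.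
  - f_equal; apply ev_ext; intro v; unfold inter, cyl; split; [intros H; split; auto; intros; lia| tauto].
  - rewrite (IHt A HA); apply sumw_ext; intro w.
    rewrite <- (fp_add _ _ Hm).
    + f_equal; apply ev_ext; intro v; unfold union, inter.
      rewrite !cyl_upd. destruct (v t); intuition; discriminate.
    + apply sa_inter; auto.
    + apply sa_inter; auto.
    + intros v [[_ H1] [_ H2]]; apply cyl_upd in H1; apply cyl_upd in H2. destruct H1, H2; congruence.
Qed.

Fixpoint enum (t : nat) (n : nat) : Omega :=
  match t with
  | 0%nat => fun _ => false
  | S t' => upd (enum t' (Nat.div2 n)) t' (Nat.odd n)
  end.

Lemma enum_surj t : forall v, exists n, cyl (enum t n) t v.
Proof.
  induction t; intros v.
  - exists 0%nat; intros i Hi; lia.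
  - destruct (IHt v) as [m Hm].
    exists (if v t then (2 * m + 1)%nat else (2 * m)%nat).
    apply cyl_upd; split.
    + destruct (v t); [replace (2*m+1)%nat with (S (2*m)) by lia; rewrite Nat.div2_succ_double|rewrite Nat.div2_double]; auto.
    + destruct (v t); [rewrite Nat.odd_odd|rewrite Nat.odd_even]; auto.
Qed.

Lemma cyl_sym w v t : cyl w t v -> cyl v t w.
Proof. unfold cyl; intros H i Hi; rewrite H; auto. Qed.

Lemma cyl_eq w v t : cyl w t v -> cyl v t = cyl w t.
Proof. intros H; apply ev_ext; intro u; unfold cyl in *; split; intros H' i Hi; rewrite H'; auto; rewrite H; auto. Qed.

Lemma det_S S : sigma_algebra S -> (forall w t, S (cyl w t)) ->
  forall t A, (forall v w, cyl w t v -> (A v <-> A w)) -> S A.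
Proof.
  intros HS Hc t A HA.
  replace A with (bigunion (fun n v => A (enum t n) /\ cyl (enum t n) t v)).
  - apply (sa_bigunion _ HS); intro n.
    destruct (classic (A (enum t n))) as [H|H].
    + replace (fun v => A (enum t n) /\ cyl (enum t n) t v) with (cyl (enum t n) t); auto.
      apply ev_ext; intro v; tauto.
    + replace (fun v => A (enum t n) /\ cyl (enum t n) t v) with (fun _ : Omega => False); [apply sa_empty; auto|].
      apply ev_ext; intro v; tauto.
  - apply ev_ext; intro v; unfold bigunion; split.
    + intros [n [H1 H2]]; apply (HA v (enum t n)); auto.
    + intros H; destruct (enum_surj t v) as [n Hn]; exists n; split; auto.
      apply (HA v (enum t n)); auto.
Qed.
Lemma bad_det S P Q eps t v w : cyl w t v -> (bad_set S P Q eps t v <-> bad_set S P Q eps t w).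
Proof. intros H; unfold bad_set, cond; rewrite (cyl_eq w v t H); tauto. Qed.

Lemma bad_S S P Q eps t : sigma_algebra S -> (forall w t, S (cyl w t)) -> S (bad_set S P Q eps t).
Proof. intros HS Hc; apply (det_S S HS Hc t); intros; apply bad_det; auto. Qed.

Lemma term_bound S P Q eps t A w : sigma_algebra S -> (forall w t, S (cyl w t)) ->
  fa_prob S P -> fa_prob S Q -> (forall w t, 0 < P (cyl w t)) -> 0 < eps -> S A ->
  Q (inter A (cyl w t)) <= Q (inter (bad_set S P Q eps t) (cyl w t)) + P A * / P (cyl w t)
     + eps * Q (inter full (cyl w t)).
Proof.
  intros HS Hc HP HQ Hpos Heps HA.
  assert (Hfc : inter full (cyl w t) = cyl w t) by (apply ev_ext; intro; unfold inter, full; tauto).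
  rewrite Hfc.
  set (C := cyl w t).
  assert (HPC : 0 < P C) by apply Hpos.
  assert (HCS : S C) by apply Hc.
  assert (HPA : 0 <= P A) by (apply (fp_nonneg _ _ HP); auto).
  assert (HQC : 0 <= Q C) by (apply (fp_nonneg _ _ HQ); auto).
  assert (Hinv : 0 < / P C) by (apply Rinv_0_lt_compat; auto).
  assert (H3 : 0 <= P A * / P C) by (apply Rmult_le_pos; lra).
  assert (H4 : 0 <= eps * Q C) by (apply Rmult_le_pos; lra).
  assert (HAC : Q (inter A C) <= Q C) by (apply (m_mono S HS Q HQ); auto; [apply sa_inter; auto| intros v [_ H]; auto]).
  assert (HbS : S (inter (bad_set S P Q eps t) C)) by (apply sa_inter; auto; apply bad_S; auto).
  assert (Hb0 : 0 <= Q (inter (bad_set S P Q eps t) C)) by (apply (fp_nonneg _ _ HQ); auto).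
  destruct (classic (bad_set S P Q eps t w)) as [Hb|Hb].
  - replace (inter (bad_set S P Q eps t) C) with C. lra.
    apply ev_ext; intro v; unfold inter, C; split; [intro H; split; auto|tauto].
    apply (bad_det S P Q eps t v w H); auto.
  - destruct (Rle_or_lt (Q C) 0) as [Hq|Hq]; [lra|].
    assert (Hc2 : Rabs (cond P A w t - cond Q A w t) <= eps).
    { apply Rnot_gt_le; intro Hg; apply Hb; split; auto. right; exists A; auto. }
    unfold cond in Hc2; fold C in Hc2.
    pose proof (Rle_abs (P (inter A C) / P C - Q (inter A C) / Q C)) as Hra.
    pose proof (Rabs_Ropp (P (inter A C) / P C - Q (inter A C) / Q C)) as Hro.
    pose proof (Rle_abs (- (P (inter A C) / P C - Q (inter A C) / Q C))) as Hrb.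
    assert (HPAC : P (inter A C) <= P A) by (apply (m_mono S HS P HP); auto; [apply sa_inter; auto| intros v [H _]; auto]).
    assert (HPAC0 : 0 <= P (inter A C)) by (apply (fp_nonneg _ _ HP); apply sa_inter; auto).
    assert (HQ1 : Q C <= 1) by (apply (m_le1 S HS Q HQ); auto).
    assert (E1 : Q (inter A C) / Q C <= P (inter A C) / P C + eps) by lra.
    assert (E2 : Q (inter A C) <= Q C * (P (inter A C) / P C) + eps * Q C).
    { apply (Rmult_le_compat_l (Q C)) in E1; [|lra].
      unfold Rdiv in E1. rewrite <- Rmult_assoc, (Rmult_comm (Q C)), Rmult_assoc, Rinv_r in E1 by lra. lra. }
    assert (E3 : Q C * (P (inter A C) / P C) <= P A * / P C).
    { unfold Rdiv. rewrite <- Rmult_assoc. apply Rmult_le_compat_r; [lra|].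
      apply Rle_trans with (1 * P (inter A C)); [apply Rmult_le_compat_r; lra| lra]. }
    lra.
Qed.

Lemma key_bound S P Q eps t A : sigma_algebra S -> (forall w t, S (cyl w t)) ->
  fa_prob S P -> fa_prob S Q -> (forall w t, 0 < P (cyl w t)) -> 0 < eps -> S A ->
  Q A <= Q (bad_set S P Q eps t) + P A * sumw t (fun w => / P (cyl w t)) + eps.
Proof.
  intros HS Hc HP HQ Hpos Heps HA.
  apply Rle_trans with (sumw t (fun w => Q (inter (bad_set S P Q eps t) (cyl w t)) + P A * / P (cyl w t)
     + eps * Q (inter full (cyl w t)))).
  - rewrite (m_sumw S Q HS HQ Hc t A HA). apply sumw_le; intro w; apply term_bound; auto.
  - rewrite !sumw_plus, !sumw_scal.
    rewrite <- (m_sumw S Q HS HQ Hc t full) by apply (sa_full _ HS).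
    rewrite <- (m_sumw S Q HS HQ Hc t (bad_set S P Q eps t)) by (apply bad_S; auto).
    rewrite (fp_full _ _ HQ); lra.
Qed.

Lemma sumw_pos t : forall F, (forall w, 0 <= F w) -> 0 <= sumw t F.
Proof. induction t; intros F H; simpl; auto. apply IHt; intro w; pose proof (H (upd w t false)); pose proof (H (upd w t true)); lra. Qed.

Theorem proposition1 (S : event -> Prop) (P Q : event -> R) :
  sigma_algebra S ->
  (forall w t, S (cyl w t)) ->
  fa_prob S P -> fa_prob S Q ->
  (forall w t, 0 < P (cyl w t)) ->
  merges S P Q ->
  abs_cont S Q P.
Proof.
  intros HS Hc HP HQ Hpos Hmg E HE HPE eps Heps.
  set (e := eps / 3).
  assert (He : 0 < e) by (unfold e; lra).
  destruct (Hmg e He e He) as [t Ht].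
  specialize (Ht t (le_n t)). unfold R_dist in Ht. rewrite Rminus_0_r in Ht.
  apply Rabs_def2 in Ht as [Ht _].
  set (M := sumw t (fun w => / P (cyl w t))).
  assert (HM : 0 <= M) by (apply sumw_pos; intro w; left; apply Rinv_0_lt_compat; auto).
  assert (Hd : 0 < e / (M + 1)) by (apply Rdiv_lt_0_compat; lra).
  destruct (HPE _ Hd) as [N HN].
  exists N; intros n Hn. specialize (HN n Hn). unfold R_dist in *. rewrite Rminus_0_r in *.
  apply Rabs_def2 in HN as [HN _].
  pose proof (key_bound S P Q e t (E n) HS Hc HP HQ Hpos He (HE n)) as K. fold M in K.
  assert (Q0 : 0 <= Q (E n)) by (apply (fp_nonneg _ _ HQ); auto).
  assert (P0 : 0 <= P (E n)) by (apply (fp_nonneg _ _ HP); auto).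
  assert (HPM : P (E n) * M <= e).
  { apply Rle_trans with (e / (M + 1) * M). apply Rmult_le_compat_r; lra.
    unfold Rdiv. rewrite Rmult_assoc. rewrite <- (Rmult_1_r e) at 2. apply Rmult_le_compat_l; [lra|].
    apply Rmult_le_reg_l with (M + 1); [lra|]. rewrite <- Rmult_assoc, Rinv_r by lra. lra. }
  rewrite Rabs_right by lra. unfold e in *. lra.
Qed.
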